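(* Let $\phi:\Delta\to\mathbb R$ be continuous. Then the function $g:\Delta\to\mathbb R$ given by $g(x)=\max_{y\in\Delta,\,y\trianglerighteq x}\phi(y)$ is continuous.
   Context: Fix $\theta\in\{2,3,\dots\}$. $\Delta=\{x\in[0,1]^\theta:x_1\ge\dots\ge x_\theta,\ \sum_i x_i=1\}$. For $x,y\in\Delta$, $y\trianglerighteq x$ means $y_1+\dots+y_i\ge x_1+\dots+x_i$ for all $i$. *)

(* Defs.v *)
From HB Require Import structures.
From mathcomp Require Import all_boot all_order all_algebra.
From mathcomp Require Import all_classical all_reals all_analysis.
Unset Printing Implicit Defensive.
Import Order.TTheory GRing.Theory Num.Theory.
Import numFieldNormedType.Exports.
Local Open Scope classical_set_scope.
Local Open Scope ring_scope.

(* The simplex of nonincreasing probability vectors in R^theta,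
   coordinates indexed by 'I_theta (x_1,...,x_theta = x 0 ... x (theta-1)). *)
Definition Delta (R : realType) (theta : nat) : set 'rV[R]_theta :=
  [set x | (forall i : 'I_theta, 0 <= x ord0 i <= 1) /\
           (forall i j : 'I_theta, (i <= j)%N -> x ord0 j <= x ord0 i) /\
           \sum_(i < theta) x ord0 i = 1].

Definition majorizes {R : realType} {theta : nat} (y x : 'rV[R]_theta) : Prop :=
  forall k : 'I_theta,
    \sum_(i < theta | (i <= k)%N) x ord0 i <= \sum_(i < theta | (i <= k)%N) y ord0 i.

(* Main.v *)
Require Import Defs.
From HB Require Import structures.
From mathcomp Require Import all_boot all_order all_algebra.
From mathcomp Require Import all_classical all_reals all_analysis.
From mathcomp Require Import ring lra.
Import Order.TTheory GRing.Theory Num.Theory.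
Import numFieldNormedType.Exports.
Local Open Scope classical_set_scope.
Local Open Scope ring_scope.


Section S.
Variables (R : realType) (theta : nat).
Implicit Types u v : 'rV[R]_theta.

Lemma coord_le u (i : 'I_theta) : `|u ord0 i| <= `|u|.
Proof.
rewrite [leRHS]/Num.norm /= mx_normrE.
by apply/bigmax_geP; right => /=; exists (ord0, i).
Qed.

Lemma norm_le1 u c : 0 <= c -> (forall i, `|u ord0 i| <= c) -> `|u| <= c.
Proof.
move=> c0 H; rewrite [leLHS]/Num.norm /= mx_normrE.
apply: bigmax_le => // -[a b] _ /=.
by rewrite (ord1 a).
Qed.

Definition S (P : pred 'I_theta) u := \sum_(i < theta | P i) u ord0 i.

Lemma S_lip P u v : `|S P u - S P v| <= theta%:R * `|u - v|.
Proof.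
rewrite /S -sumrB.
apply: le_trans (ler_norm_sum _ _ _) _.
apply: le_trans (_ : \sum_(i < theta | P i) `|u - v| <= _).
  by apply: ler_sum => i _; have := coord_le (u - v) i; rewrite !mxE.
apply: le_trans (_ : \sum_(i < theta) `|u - v| <= _).
  by rewrite [leLHS]big_mkcond; apply: ler_sum => i _; case: (P i).
by rewrite sumr_const card_ord mulr_natl.
Qed.
Lemma closure_le (A : set 'rV[R]_theta) (L : 'rV[R]_theta -> R) (C c : R) :
  0 < C -> (forall u v, `|L u - L v| <= C * `|u - v|) ->
  (forall u, A u -> L u <= c) -> forall p, closure A p -> L p <= c.
Proof.
move=> C0 Lip HA p cl; rewrite leNgt; apply/negP => cp.
have d0 : 0 < (L p - c) / C by apply: divr_gt0 => //; rewrite subr_gt0.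
have [z [Az bz]] := cl _ (nbhsx_ballx p _ d0).
move: bz; rewrite -ball_normE /ball_ /= => bz.
have := Lip p z; have := HA z Az.
have : C * `|p - z| < C * ((L p - c) / C) by rewrite ltr_pM2l.
rewrite mulrCA divff ?gt_eqF // mulr1 => h1 h2 h3.
have := ler_norm (L p - L z); lra.
Qed.

Lemma Delta_closed : closed (Delta R theta).
Proof.
have t0 : (0 : R) < theta%:R + 1 by rewrite ltr_wpDl.
have lipS : forall P u v, `|S P u - S P v| <= (theta%:R + 1) * `|u - v|.
  move=> P u v; apply: le_trans (S_lip P u v) _; rewrite ler_wpM2r //.
  by rewrite lerDl.
have coordS : forall i u, u ord0 i = S (pred1 i) u.
  by move=> i u; rewrite /S big_pred1_eq.
move=> p cl; split; [|split].
- move=> i; apply/andP; split.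
  + rewrite -oppr_le0; apply: (@closure_le _ (fun u => - u ord0 i) (theta%:R + 1) _ _ _ _ _ cl) => //.
      move=> u v; rewrite (_ : _ - _ = -(u ord0 i - v ord0 i)); last by ring.
      by rewrite normrN (coordS i u) (coordS i v); apply: lipS.
    by move=> u [H _]; have /andP[] := H i; rewrite oppr_le0.
  + apply: (@closure_le _ (fun u => u ord0 i) (theta%:R + 1) _ _ _ _ _ cl) => //.
      by move=> u v; rewrite (coordS i u) (coordS i v); apply: lipS.
    by move=> u [H _]; have /andP[] := H i.
- move=> i j ij; rewrite -subr_le0.
  apply: (@closure_le _ (fun u => u ord0 j - u ord0 i) ((theta%:R + 1) *+ 2) _ _ _ _ _ cl) => //.
    move=> u v; rewrite (_ : _ - _ = (u ord0 j - v ord0 j) - (u ord0 i - v ord0 i)); last by ring.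
    apply: le_trans (ler_normB _ _) _.
    by rewrite mulr2n mulrDl lerD // (coordS _ u) (coordS _ v) // ?lipS.
  by move=> u [_ [H _]]; rewrite subr_le0; exact: H.
- apply/eqP; rewrite eq_le; apply/andP; split.
  + apply: (@closure_le _ (S predT) (theta%:R + 1) _ _ _ _ _ cl) => //.
    by move=> u [_ [_ H]]; rewrite /S H.
  + rewrite -lerN2; apply: (@closure_le _ (fun u => - S predT u) (theta%:R + 1) _ _ _ _ _ cl) => //.
      move=> u v; rewrite (_ : _ - _ = -(S predT u - S predT v)); last by ring.
      by rewrite normrN; apply: lipS.
    by move=> u [_ [_ H]]; rewrite /S H.
Qed.

Lemma Delta_compact : compact (Delta R theta).
Proof.
apply: bounded_closed_compact; last exact: Delta_closed.
exists 1; split; first exact: num_real.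
move=> M M1 x /= [H _]; apply: norm_le1; first lra.
move=> i; have /andP[h1 h2] := H i; rewrite ger0_norm //; lra.
Qed.

Lemma within_ballP (A : set 'rV[R]_theta) (x : 'rV[R]_theta) (P : 'rV[R]_theta -> Prop) :
  within A (nbhs x) P <-> exists2 r, 0 < r & forall y, `|x - y| < r -> A y -> P y.
Proof.
split.
  move=> /nbhs_ballP [r r0 H]; exists r => // y xy; apply: H.
  by rewrite -ball_normE.
move=> [r r0 H]; apply/nbhs_ballP; exists r => // y; rewrite -ball_normE; exact: H.
Qed.

Lemma S_close P u v r : `|u - v| < r / (theta%:R + 1) -> `|S P u - S P v| < r.
Proof.
move=> h; apply: le_lt_trans (S_lip P u v) _.
have t0 : (0 : R) < theta%:R + 1 by rewrite ltr_wpDl.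
apply: le_lt_trans (_ : (theta%:R + 1) * `|u - v| < _).
  by rewrite ler_wpM2r // lerDl.
by rewrite mulrC -ltr_pdivlMr.
Qed.

Lemma S_le1 P u : Delta R theta u -> S P u <= 1.
Proof.
move=> [H [_ Hs]]; rewrite -Hs /S [leLHS]big_mkcond; apply: ler_sum => i _.
by case: (P i) => //; have /andP[] := H i.
Qed.

Lemma S_comb P a b u v : S P (a *: u + b *: v) = a * S P u + b * S P v.
Proof.
rewrite /S; under eq_bigr do rewrite !mxE.
by rewrite big_split /= -!mulr_sumr.
Qed.

Lemma Delta_conv u v t : Delta R theta u -> Delta R theta v -> 0 <= t <= 1 ->
  Delta R theta ((1 - t) *: u + t *: v).
Proof.
move=> [Hu [Mu Su]] [Hv [Mv Sv]] /andP[t0 t1]; split; [|split].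
- move=> i; rewrite !mxE; have /andP[a0 a1] := Hu i; have /andP[b0 b1] := Hv i.
  apply/andP; split; nra.
- move=> i j ij; rewrite !mxE; have := Mu i j ij; have := Mv i j ij; nra.
- under eq_bigr do rewrite !mxE.
  by rewrite big_split /= -!mulr_sumr Su Sv; ring.
Qed.

Hypothesis th : (0 < theta)%N.
Definition e1 : 'rV[R]_theta := \row_(i < theta) (if val i == 0%N then 1 else 0).

Lemma S_e1 (P : pred 'I_theta) : P (Ordinal th) -> S P e1 = 1.
Proof.
move=> Pi; rewrite /S (bigD1 (Ordinal th)) //= mxE /= big1 ?addr0 // => i /andP[_ ni].
rewrite mxE ifF //; apply/negP => /eqP h; move/eqP: ni; apply.
by apply: val_inj.
Qed.

Lemma Delta_e1 : Delta R theta e1.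
Proof.
split; [|split].
- by move=> i; rewrite mxE; case: ifP => _; rewrite ?ler01 ?lexx.
- move=> i j ij; rewrite !mxE; case: ifP => j0; case: ifP => i0 //.
  + by move/eqP: j0 ij => ->; rewrite leqn0 i0.
- by have := @S_e1 predT isT; rewrite /S.
Qed.

Variables (phi g : 'rV[R]_theta -> R).
Hypothesis phic : forall y, Delta R theta y ->
  phi @ within (Delta R theta) (nbhs y) --> phi y.
Hypothesis Hg : forall x, Delta R theta x ->
     (exists2 y, (Delta R theta y /\ majorizes y x) & g x = phi y) /\
     (forall y, Delta R theta y -> majorizes y x -> phi y <= g x).

Lemma phi_near y (e : R) : Delta R theta y -> 0 < e ->
  exists2 r, 0 < r & forall z, `|y - z| < r -> Delta R theta z -> `|phi y - phi z| < e.
Proof.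
move=> Dy e0; have /cvgrPdist_lt/(_ e e0) := @phic y Dy.
by move/within_ballP.
Qed.

Lemma lsc x (e : R) : Delta R theta x -> 0 < e ->
  \forall t \near within (Delta R theta) (nbhs x), g x - e < g t.
Proof.
move=> Dx e0; have [[y0 [Dy0 my0] gy0] _] := Hg x Dx.
have [r r0 Hr] := phi_near y0 e Dy0 e0.
set c := `|e1 - y0|.
have c0 : 0 <= c by rewrite /c normr_ge0.
set t := r / (r + 2 * (c + 1)).
have t0 : 0 < t by apply: divr_gt0 => //; lra.
have t1 : t <= 1.
  by rewrite /t ler_pdivrMr ?mul1r; lra.
have tc : t * c < r.
  rewrite /t mulrAC ltr_pdivrMr; last lra.
  by rewrite ltr_pM2l //; lra.
set ys := (1 - t) *: y0 + t *: e1.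
have Dys : Delta R theta ys by apply: Delta_conv => //; [exact: Delta_e1|lra].
have yys : `|y0 - ys| < r.
  rewrite (_ : y0 - ys = t *: (y0 - e1)); last first.
    by apply/rowP => i; rewrite /ys !mxE; ring.
  by rewrite normrZ gtr0_norm // distrC.
have phys : g x - e < phi ys.
  have := Hr _ yys Dys; rewrite gy0 ltr_distlC => /andP[h _]; lra.
have Sys : forall k : 'I_theta, \forall x' \near within (Delta R theta) (nbhs x),
    S (fun i : 'I_theta => (i <= k)%N) x' <= S (fun i : 'I_theta => (i <= k)%N) ys.
  move=> k; set P := (fun i : 'I_theta => (i <= k)%N).
  have Se : S P ys = (1 - t) * S P y0 + t by rewrite /ys S_comb S_e1 ?mulr1.
  have Sy1 := S_le1 P y0 Dy0.
  have [Sy|Sy] := leP 1 (S P y0).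
    apply/within_ballP; exists 1 => // x' _ Dx'.
    rewrite Se; have := S_le1 P x' Dx'; nra.
  apply/within_ballP; exists ((t * (1 - S P y0)) / (theta%:R + 1)).
    by apply: divr_gt0; [nra| rewrite ltr_wpDl].
  move=> x' xx' Dx'.
  have := S_close P _ _ _ xx'; have := my0 k; rewrite -/(S P x) -/(S P y0) Se.
  move=> h1 /ltr_distlCDr h2; nra.
have HF := @filter_forall _ _ _ _ _ Sys.
have HD := withinT (Delta R theta) (nbhs_filter x).
near=> x'.
have Dx' : Delta R theta x' by near: x'; exact: HD.
have maj : majorizes ys x' by near: x'; exact: HF.
have [_ H] := Hg x' Dx'; have := H ys Dys maj; lra.
Unshelve. all: end_near.
Qed.

Lemma usc x (e : R) : Delta R theta x -> 0 < e ->
  \forall t \near within (Delta R theta) (nbhs x), g t < g x + e.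
Proof.
move=> Dx e0.
have [//|nP] := pselect (\forall t \near within (Delta R theta) (nbhs x), g t < g x + e).
exfalso.
pose B (r : R) := [set y | exists x', [/\ Delta R theta x', `|x - x'| < r,
   Delta R theta y, majorizes y x' & g x + e <= phi y]].
pose F := filter_from [set r : R | 0 < r] B.
have FF : Filter F.
  apply: filter_from_filter; first by exists 1; rewrite /= ltr01.
  move=> i j i0 j0; exists (Num.min i j); first by rewrite /= lt_min i0 j0.
  move=> y [x' [D1 h D2 m h2]]; move: h; rewrite lt_min => /andP[hi hj].
  by split; exists x'; split.
have PF : ProperFilter F.
  apply: filter_from_proper => r r0.
  have [//|nB] := pselect (B r !=set0).
  exfalso; apply: nP; apply/within_ballP; exists r => // t xt Dt.
  rewrite ltNge; apply/negP => h.
  have [[y [Dy my] gy] _] := Hg t Dt.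
  by apply: nB; exists y; exists t; split => //; rewrite -gy.
have FD : F (Delta R theta) by exists 1 => //= y [x' []].
have [y0 [Dy0 cly0]] := Delta_compact F PF FD.
have FB : forall r, 0 < r -> F (B r) by move=> r r0; exists r.
have nb : forall r, 0 < r -> nbhs y0 [set z | `|y0 - z| < r].
  by move=> r r0; apply/nbhs_ballP; exists r => // z; rewrite -ball_normE.
have h1 : g x + e <= phi y0.
  rewrite leNgt; apply/negP => h.
  have [r r0 Hr] := phi_near y0 (g x + e - phi y0) Dy0 (ltac:(lra)).
  have [z [[x' [_ _ Dz _ hz]] zr]] := cly0 _ _ (FB 1 ltr01) (nb r r0).
  have := Hr z zr Dz; rewrite ltr_distlC => /andP[_ ?]; lra.
have h2 : majorizes y0 x.
  move=> k; set P := (fun i : 'I_theta => (i <= k)%N).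
  rewrite -/(S P x) -/(S P y0) leNgt; apply/negP => h.
  have t0 : (0 : R) < theta%:R + 1 by rewrite ltr_wpDl.
  set rho := (S P x - S P y0) / 2 / (theta%:R + 1).
  have rho0 : 0 < rho by rewrite /rho !divr_gt0 // subr_gt0.
  have [z [[x' [Dx' xx' Dz mz _]] zr]] := cly0 _ _ (FB rho rho0) (nb rho rho0).
  have := S_close P _ _ _ xx'; have := S_close P _ _ _ zr.
  have := mz k; rewrite -/(S P x') -/(S P z).
  rewrite !ltr_distlC => ? /andP[? ?] /andP[? ?]; lra.
have [_ H] := Hg x Dx; have := H y0 Dy0 h2; lra.
Qed.
End S.

Theorem lemma3p3 (R : realType) (theta : nat) (htheta : (2 <= theta)%N)
  (phi g : 'rV[R]_theta -> R) :
  {within Delta R theta, continuous phi} ->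
  (forall x, Delta R theta x ->
     (exists2 y, (Delta R theta y /\ majorizes y x) & g x = phi y) /\
     (forall y, Delta R theta y -> majorizes y x -> phi y <= g x)) ->
  {within Delta R theta, continuous g}.
Proof.
move=> phic Hg.
have th : (0 < theta)%N by apply: leq_trans htheta.
move/subspace_continuousP: phic => phic0.
have phic : forall y, Delta R theta y ->
    phi @ within (Delta R theta) (nbhs y) --> phi y.
  by move=> y Dy; exact: phic0.
apply/subspace_continuousP => x Dx; apply/cvgrPdist_lt => e e0.
have L := @lsc _ _ th _ _ phic Hg _ _ Dx e0.
have U := @usc _ _ _ _ phic Hg _ _ Dx e0.
near=> t.
have h1 : g x - e < g t by near: t; exact: L.
have h2 : g t < g x + e by near: t; exact: U.
by rewrite ltr_distlC h1 h2.
Unshelve. all: end_near.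
Qed.
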